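(* Let $n\ge 2$ and let $g^K\in\mathcal{G}^K_{n,C}$ be a ranked labeled tree on the leaf set $[n]=\{1,\dots,n\}$ that is compatible with a given Kingman perfect phylogeny $\mathcal{T}^K$. For $i=1,\dots,n-1$, let $g^K_{i,1}$ and $g^K_{i,2}$ be the two subtrees (clades) of $g^K$ that are merged at the $i$-th coalescent event (i.e. the two child subtrees of the internal node of rank $i$), and let $|g^K_{i,j}|$ denote the number of leaves of $g^K_{i,j}$. Let $c^{LT}(g^K)$ be the number of ranked labeled trees $g'^K\in\mathcal{G}^K_{n,C}$ with $LT(g'^K)=LT(g^K)$. Then $$c^{LT}(g^K)=\prod_{i=1}^{n-1}\frac{(|g^K_{i,1}|+|g^K_{i,2}|-2)!}{(|g^K_{i,1}|-1)!\,(|g^K_{i,2}|-1)!}.$$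
   Context: A ranked labeled tree on $[n]$ is a rooted binary tree with $n$ leaves bijectively labeled by $[n]$, together with a ranking of its $n-1$ internal nodes, i.e. a bijection from internal nodes to $\{1,\dots,n-1\}$ such that every internal node has smaller rank than its parent (rank $i$ = the $i$-th coalescence, read from the leaves to the root). Two ranked labeled trees are equal if there is a leaf-label-preserving and rank-preserving isomorphism between them. For a ranked labeled tree $g^K$, $LT(g^K)$ denotes the unranked labeled tree obtained by forgetting the ranking. A Kingman perfect phylogeny $\mathcal{T}^K$ is a rooted (possibly multifurcating) tree in which each node $v$ carries a (possibly empty) set of individual labels, these sets being pairwise disjoint with union $[n]$. For a node $v$, let $D(v)$ be the union of the label sets of all nodes in the subtree of $\mathcal{T}^K$ rooted at $v$. A ranked labeled tree $g^K$ on $[n]$ is compatible with $\mathcal{T}^K$ if for every node $v$ of $\mathcal{T}^K$ with $D(v)\neq\emptyset$, the set $D(v)$ is exactly the leaf set of some subtree (clade) of $g^K$. $\mathcal{G}^K_{n,C}$ denotes the set of ranked labeled trees on $[n]$ compatible with $\mathcal{T}^K$. *)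

(* Defs.v *)
From mathcomp Require Import all_boot.
Set Implicit Arguments. Unset Strict Implicit. Unset Printing Implicit Defensive.

(* Binary trees whose leaves carry a label and whose internal nodes carry a rank. *)
Inductive rtree : Type :=
| Leaf of nat
| Node of nat & rtree & rtree.

Fixpoint leaves (t : rtree) : seq nat :=
  match t with Leaf l => [:: l] | Node _ a b => leaves a ++ leaves b end.

Fixpoint ranks (t : rtree) : seq nat :=
  match t with Leaf _ => [::] | Node r a b => r :: ranks a ++ ranks b end.

Definition child_ok (r : nat) (c : rtree) : bool :=
  if c is Node r' _ _ then r' < r else true.

Fixpoint rank_ok (t : rtree) : bool :=
  match t with
  | Leaf _ => true
  | Node r a b => [&& child_ok r a, child_ok r b, rank_ok a & rank_ok b]
  end.

Definition ranked_labeled_tree (n : nat) (t : rtree) : Prop :=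
  perm_eq (leaves t) (iota 1 n) /\ perm_eq (ranks t) (iota 1 n.-1) /\ rank_ok t.

Fixpoint riso (t u : rtree) : bool :=
  match t, u with
  | Leaf a, Leaf b => a == b
  | Node r a1 a2, Node s b1 b2 =>
      (r == s) && ((riso a1 b1 && riso a2 b2) || (riso a1 b2 && riso a2 b1))
  | _, _ => false
  end.

(* leaf-label-preserving isomorphism ignoring ranks: LT t = LT u *)
Fixpoint ltiso (t u : rtree) : bool :=
  match t, u with
  | Leaf a, Leaf b => a == b
  | Node _ a1 a2, Node _ b1 b2 =>
      (ltiso a1 b1 && ltiso a2 b2) || (ltiso a1 b2 && ltiso a2 b1)
  | _, _ => false
  end.

Fixpoint clades (t : rtree) : seq (seq nat) :=
  leaves t :: match t with Leaf _ => [::] | Node _ a b => clades a ++ clades b end.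

(* Kingman perfect phylogeny: rooted multifurcating tree, each node carries a
   (possibly empty) list of individual labels. *)
Inductive ptree : Type := PNode of seq nat & seq ptree.

Fixpoint pD (t : ptree) : seq nat :=
  match t with PNode ls cs => ls ++ flatten (map pD cs) end.

Fixpoint pDs (t : ptree) : seq (seq nat) :=
  match t with PNode ls cs => pD (PNode ls cs) :: flatten (map pDs cs) end.

(* label sets pairwise disjoint (and duplicate free) with union [n] *)
Definition kingman_pp (n : nat) (T : ptree) : Prop := perm_eq (pD T) (iota 1 n).

Definition compatible (T : ptree) (g : rtree) : Prop :=
  forall D, D \in pDs T -> D != [::] -> exists2 c, c \in clades g & c =i D.

Definition GKnC (n : nat) (T : ptree) (g : rtree) : Prop :=
  ranked_labeled_tree n g /\ compatible T g.

(* list membership (rtree has no eqType structure here) *)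
Fixpoint tree_in (t : rtree) (l : seq rtree) : Prop :=
  if l is u :: l' then u = t \/ tree_in t l' else False.

(* the number of ranked labeled trees (up to equality, i.e. riso) satisfying P
   is k: there is a list of k pairwise distinct such trees covering all of them *)
Definition num_trees (P : rtree -> Prop) (k : nat) : Prop :=
  exists l : seq rtree,
    [/\ size l = k, forall t, tree_in t l -> P t,
        pairwise (fun a b => ~~ riso a b) l &
        forall t, P t -> exists2 u, tree_in u l & riso t u].

Fixpoint child_sizes (i : nat) (t : rtree) : option (nat * nat) :=
  match t with
  | Leaf _ => None
  | Node r a b =>
      if r == i then Some (size (leaves a), size (leaves b))
      else if child_sizes i a is Some p then Some p else child_sizes i b
  end.

(* Main.v *)
Require Import Defs.
From HB Require Import structures.
From mathcomp Require Import all_boot all_order all_algebra.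
Import GRing.Theory Num.Theory.
Set Implicit Arguments. Unset Strict Implicit. Unset Printing Implicit Defensive.
Local Open Scope nat_scope.

Definition rtree_eq_dec : forall a b : rtree, {a = b} + {a <> b}.
Proof. decide equality; exact: (fun x y : nat => decP (@eqP _ x y)). Defined.

HB.instance Definition _ := comparableMixin rtree_eq_dec.

Lemma tree_inP t l : tree_in t l <-> t \in l.
Proof.
elim: l => [|u l IH] //=; rewrite in_cons; split.
  by case=> [->|/IH ->]; rewrite ?eqxx ?orbT.
by case/orP=> [/eqP->|/IH]; [left|right].
Qed.

Lemma riso_refl t : riso t t.
Proof. by elim: t => [l|r a IHa b IHb] /=; rewrite ?eqxx ?IHa ?IHb. Qed.

Lemma riso_sym a b : riso a b -> riso b a.
Proof.
elim: a b => [l|r a1 IH1 a2 IH2] [l'|r' b1 b2] //=.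
  by move/eqP->.
case/andP=> /eqP-> /orP[/andP[h1 h2]|/andP[h1 h2]]; rewrite eqxx /=.
  by rewrite (IH1 _ h1) (IH2 _ h2).
by rewrite (IH1 _ h1) (IH2 _ h2) orbT.
Qed.

Lemma riso_trans a b c : riso a b -> riso b c -> riso a c.
Proof.
elim: a b c => [l|r a1 IH1 a2 IH2] [l'|r' b1 b2] [l''|r'' c1 c2] //=.
  by move=> /eqP-> /eqP->.
case/andP=> /eqP-> H1 /andP[/eqP-> H2]; rewrite eqxx /=.
case/orP: H1 => /andP[h1 h2]; case/orP: H2 => /andP[k1 k2].
- by rewrite (IH1 _ _ h1 k1) (IH2 _ _ h2 k2).
- by rewrite (IH1 _ _ h1 k1) (IH2 _ _ h2 k2) orbT.
- by rewrite (IH1 _ _ h1 k2) (IH2 _ _ h2 k1) orbT.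
- by rewrite (IH1 _ _ h1 k2) (IH2 _ _ h2 k1).
Qed.

Lemma riso_perm a b : riso a b -> perm_eq (leaves a) (leaves b).
Proof.
elim: a b => [l|r a1 IH1 a2 IH2] [l'|r' b1 b2] //=.
  by move/eqP->.
case/andP=> _ /orP[/andP[h1 h2]|/andP[h1 h2]].
  by rewrite perm_cat // ?IH1 ?IH2.
by rewrite perm_sym -(perm_catC) perm_cat // perm_sym ?IH1 ?IH2.
Qed.

Lemma leaves_nil t : leaves t != [::].
Proof. by elim: t => [l|r a IHa b IHb] //=; case: (leaves a) IHa. Qed.

Lemma riso_eq a b : uniq (leaves a) -> leaves a = leaves b -> riso a b -> a = b.
Proof.
elim: a b => [l|r a1 IH1 a2 IH2] [l'|r' b1 b2] //=.
  by move=> _ _ /eqP->.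
move=> U E /andP[/eqP<- /orP[/andP[h1 h2]|/andP[h1 h2]]].
  have s1 : size (leaves a1) = size (leaves b1) by apply: perm_size; apply: riso_perm.
  move/eqP: E; rewrite eqseq_cat // => /andP[/eqP e1 /eqP e2].
  move: U; rewrite cat_uniq => /and3P[u1 _ u2].
  by rewrite (IH1 b1) // (IH2 b2).
exfalso.
move: U; rewrite E cat_uniq => /and3P[_ D _].
have p1 := riso_perm h1.
move: E (leaves_nil a1) (leaves_nil b1) p1 D.
case: (leaves a1) => // x s1; case: (leaves b1) => // y s2 [<- _] _ _ p1 /hasPn D.
have : x \in leaves b2 by rewrite -(perm_mem p1) mem_head.
by move/D; rewrite mem_head.
Qed.

Fixpoint splits (k : nat) (s : seq nat) : seq (seq nat * seq nat) :=
  match s with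
  | [::] => if k is 0 then [:: ([::], [::])] else [::]
  | x :: s' => (if k is k'.+1 then [seq (x :: p.1, p.2) | p <- splits k' s'] else [::])
               ++ [seq (p.1, x :: p.2) | p <- splits k s']
  end.

Lemma size_splits k s : size (splits k s) = 'C(size s, k).
Proof.
elim: s k => [|x s IH] [|k] //=; first by rewrite size_map IH !bin0.
by rewrite size_cat !size_map !IH binS addnC.
Qed.

Lemma splits_mem k s p : p \in splits k s ->
  perm_eq (p.1 ++ p.2) s /\ size p.1 = k.
Proof.
elim: s k p => [|x s IH] k p /=.
  by case: k => //; rewrite inE => /eqP->.
rewrite mem_cat => /orP[].
  case: k => // k /mapP[q /IH[P S] ->] /=.
  by rewrite perm_cons S.
case/mapP=> [q /IH[P S] ->] /=; split=> //.
by rewrite -(perm_catCA [:: x]) perm_cons.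
Qed.

Lemma splits_complete s A B : perm_eq s (A ++ B) ->
  exists2 p, p \in splits (size A) s & perm_eq p.1 A /\ perm_eq p.2 B.
Proof.
elim: s A B => [|x s IH] A B /=.
  move/perm_size; rewrite size_cat; case: A => // ; case: B => // _.
  by exists ([::], [::]); rewrite ?inE.
move=> P.
have : x \in A ++ B by rewrite -(perm_mem P) mem_head.
rewrite mem_cat => /orP[xA|xB].
  have PA := perm_to_rem xA.
  have : perm_eq s (rem x A ++ B).
    rewrite -(perm_cons x); apply: (perm_trans P).
    by rewrite -cat_cons perm_cat2r.
  case/IH=> q qin [q1 q2].
  exists (x :: q.1, q.2); last by split=> //; rewrite perm_sym (perm_trans PA) // perm_cons perm_sym.
  rewrite (perm_size PA) /= mem_cat; apply/orP; left.
  by apply: (map_f (fun p : seq nat * seq nat => _) qin).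
have PB := perm_to_rem xB.
have : perm_eq s (A ++ rem x B).
  rewrite -(perm_cons x); apply: (perm_trans P).
  have PB' : perm_eq (A ++ B) (A ++ x :: rem x B) by rewrite perm_cat2l.
  apply: (perm_trans PB').
  by rewrite -cat1s perm_catCA.
case/IH=> q qin [q1 q2].
exists (q.1, x :: q.2); last by split=> //; rewrite perm_sym (perm_trans PB) // perm_cons perm_sym.
rewrite mem_cat; apply/orP; right.
by apply: (map_f (fun p : seq nat * seq nat => _) qin).
Qed.

Lemma splits_inj k s p q : uniq s -> p \in splits k s -> q \in splits k s ->
  perm_eq p.1 q.1 -> p = q.
Proof.
elim: s k p q => [|x s IH] k p q /=.
  by case: k => //; rewrite !inE => _ /eqP-> /eqP->.
case/andP=> xs us; rewrite !mem_cat.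
have notin k' r : r \in splits k' s -> x \notin r.1.
  by move/splits_mem=> [P _]; apply/negP=> xr; case/negP: xs; rewrite -(perm_mem P) mem_cat xr.
case: k => [|k] /=.
  move=> /mapP[p' pin ->] /mapP[q' qin ->] /= E.
  by rewrite (IH 0 p' q').
case/orP=> /mapP[p' pin ->]; case/orP=> /mapP[q' qin ->] /= E.
- by rewrite (IH k p' q') // -(perm_cons x).
- by have := notin _ _ qin; rewrite -(perm_mem E) mem_head.
- by have := notin _ _ pin; rewrite (perm_mem E) mem_head.
- by rewrite (IH k.+1 p' q').
Qed.

Lemma splits_uniq k s : uniq s -> uniq (splits k s).
Proof.
elim: s k => [|x s IH] k /=.
  by case: k.
case/andP=> xs us.
have notin k' r : r \in splits k' s -> x \notin r.1.
  by move/splits_mem=> [P _]; apply/negP=> xr; case/negP: xs; rewrite -(perm_mem P) mem_cat xr.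
have inj2 : injective (fun p : seq nat * seq nat => (p.1, x :: p.2)).
  by move=> [a b] [c d] /= [-> ->].
case: k => [|k] /=; first by rewrite map_inj_uniq // IH.
rewrite cat_uniq !map_inj_uniq ?IH //; last by move=> [a b] [c d] /= [-> ->].
rewrite andbT; apply/hasPn=> z /mapP[q qin ->] /=; apply/negP=> /mapP[p pin [E _]].
by have := notin _ _ qin; rewrite E mem_head.
Qed.

Definition mx (S : seq nat) := foldr maxn 0 S.

Lemma mx_ge x S : x \in S -> x <= mx S.
Proof.
elim: S => [|y S IH] //=; rewrite in_cons => /orP[/eqP->|/IH h].
  by rewrite leq_maxl.
by rewrite (leq_trans h) // leq_maxr.
Qed.

Lemma mx_mem S : S != [::] -> mx S \in S.
Proof.
elim: S => [|y S IH] // _; rewrite in_cons.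
case: S IH => [|z S] IH; first by rewrite /= maxn0 eqxx.
change (mx (y :: z :: S)) with (maxn y (mx (z :: S))).
set w := mx (z :: S).
have wm : w \in z :: S by apply: IH.
case: (leqP y w) => h.
  by rewrite wm orbT.
by rewrite eqxx.
Qed.

Definition root (t : rtree) := if t is Node r _ _ then r else 0.

Lemma rank_ok_lt r a : rank_ok a -> child_ok r a -> forall q, q \in ranks a -> q < r.
Proof.
elim: a r => [l|r' a IHa b IHb] r //= /and4P[ca cb oa ob] lt q.
rewrite in_cons mem_cat => /orP[/eqP->//|/orP[qa|qb]].
  by apply: ltn_trans lt; apply: IHa.
by apply: ltn_trans lt; apply: IHb.
Qed.

Lemma child_ok_lt m x : (forall q, q \in ranks x -> q < m) -> child_ok m x.
Proof. by case: x => //= r a b H; apply: H; rewrite mem_head. Qed.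

Lemma size_leaves t : size (leaves t) = (size (ranks t)).+1.
Proof. by elim: t => [l|r a IHa b IHb] //=; rewrite !size_cat IHa IHb addnS addSn. Qed.

Lemma ltiso_size u t : ltiso u t -> size (ranks u) = size (ranks t).
Proof.
elim: u t => [l|r a IHa b IHb] [l'|r' c d] //= /orP[/andP[h1 h2]|/andP[h1 h2]];
  rewrite !size_cat.
  by rewrite (IHa _ h1) (IHb _ h2).
by rewrite (IHa _ h1) (IHb _ h2) addnC.
Qed.

Fixpoint gen (t : rtree) (S : seq nat) : seq rtree :=
  match t with
  | Leaf l => [:: Leaf l]
  | Node _ a b =>
     flatten [seq [seq Node (mx S) x y | x <- gen a p.1, y <- gen b p.2]
             | p <- splits (size (ranks a)) (rem (mx S) S)]
  end.

Lemma gen_memP r a b S u : u \in gen (Node r a b) S ->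
  exists p, exists x, exists y,
   [/\ p \in splits (size (ranks a)) (rem (mx S) S), x \in gen a p.1, y \in gen b p.2
     & u = Node (mx S) x y].
Proof.
move=> /flattenP[s /mapP[p pin ->] /allpairsP[[x y] [/= xin yin ->]]].
by exists p, x, y.
Qed.

Lemma gen_sound t S u : uniq S -> size S = size (ranks t) -> u \in gen t S ->
  [/\ perm_eq (ranks u) S, rank_ok u, leaves u = leaves t, clades u = clades t
    & ltiso u t].
Proof.
elim: t S u => [l|r a IHa b IHb] S u US SS.
  by rewrite inE => /eqP->; case: S SS US => //= _ _; rewrite ?eqxx.
case/gen_memP=> p [x [y [pin xin yin ->]]].
have Sn : S != [::] by case: S SS {US pin}.
have mS := mx_mem Sn.
have [P1 s1] := splits_mem pin.
have US' : uniq (rem (mx S) S) by rewrite rem_uniq.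
have U12 : uniq (p.1 ++ p.2) by rewrite (perm_uniq P1).
move: (U12); rewrite cat_uniq => /and3P[u1 _ u2].
have s2 : size p.2 = size (ranks b).
  move: (perm_size P1); rewrite size_cat size_rem // s1 SS /= size_cat.
  by move/eqP; rewrite eqn_add2l => /eqP.
have [Px ox lx cx ix] := IHa _ _ u1 s1 xin.
have [Py oy ly cy iy] := IHb _ _ u2 s2 yin.
have ltm q : q \in p.1 ++ p.2 -> q < mx S.
  rewrite (perm_mem P1) (mem_rem_uniq _ US) inE => /andP[ne qS].
  by rewrite ltn_neqAle ne mx_ge.
split => /=.
- have PS := perm_to_rem mS.
  rewrite perm_sym; apply: (perm_trans PS).
  rewrite perm_cons perm_sym; apply: (perm_trans _ P1).
  by rewrite perm_cat.
- rewrite ox oy !andbT; apply/andP; split; apply: child_ok_lt => q.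
    by rewrite (perm_mem Px) => h; apply: ltm; rewrite mem_cat h.
  by rewrite (perm_mem Py) => h; apply: ltm; rewrite mem_cat h orbT.
- by rewrite lx ly.
- by rewrite lx ly cx cy.
- by rewrite ix iy.
Qed.

Lemma gen_memI r a b S p x y :
  p \in splits (size (ranks a)) (rem (mx S) S) -> x \in gen a p.1 -> y \in gen b p.2 ->
  Node (mx S) x y \in gen (Node r a b) S.
Proof.
move=> pin xin yin; apply/flattenP.
exists [seq Node (mx S) x0 y0 | x0 <- gen a p.1, y0 <- gen b p.2].
  by apply: (map_f (fun p : seq nat * seq nat => _) pin).
exact: allpairs_f.
Qed.

Lemma gen_complete t u S : ltiso u t -> perm_eq (ranks u) S -> rank_ok u ->
  exists2 v, v \in gen t S & riso u v.
Proof.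
elim: t u S => [l|r a IHa b IHb] [l'|r' x y] S //=.
  by move=> /eqP-> _ _; exists (Leaf l); rewrite ?mem_head //= eqxx.
have claim : forall x y, ltiso x a -> ltiso y b -> perm_eq (r' :: ranks x ++ ranks y) S ->
    rank_ok (Node r' x y) -> exists2 v, v \in gen (Node r a b) S & riso (Node r' x y) v.
  move=> {}x {}y ha hb P /= /and4P[cx cy ox oy].
  have r'S : r' \in S by rewrite -(perm_mem P) mem_head.
  have Sn : S != [::] by case: (S) r'S.
  have emx : mx S = r'.
    apply/eqP; rewrite eqn_leq mx_ge // andbT.
    have := mx_mem Sn; rewrite -(perm_mem P) in_cons mem_cat => /orP[/eqP->//|/orP[h|h]].
      by rewrite ltnW // (rank_ok_lt ox cx).
    by rewrite ltnW // (rank_ok_lt oy cy).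
  have PR : perm_eq (rem (mx S) S) (ranks x ++ ranks y).
    rewrite emx -(perm_cons r') perm_sym (perm_trans P) //.
    exact: perm_to_rem.
  have [p pin [p1 p2]] := splits_complete PR.
  rewrite (ltiso_size ha) in pin.
  rewrite perm_sym in p1; rewrite perm_sym in p2.
  have [v1 v1in r1] := IHa x p.1 ha p1 ox.
  have [v2 v2in r2] := IHb y p.2 hb p2 oy.
  exists (Node (mx S) v1 v2); first exact: gen_memI pin v1in v2in.
  by rewrite /= emx eqxx r1 r2.
case/orP=> /andP[ha hb] P O.
  exact: claim.
have [v vin rv] : exists2 v, v \in gen (Node r a b) S & riso (Node r' y x) v.
  apply: claim => //.
    apply: perm_trans P; by rewrite perm_cons perm_catC.
  by move: O => /= /and4P[-> -> -> ->].
exists v; [exact: vin | change (riso (Node r' x y) v); apply: (riso_trans _ rv)].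
by rewrite /= eqxx !riso_refl orbT.
Qed.

Lemma uniq_flatten_map (T U : eqType) (F : T -> seq U) (L : seq T) :
  uniq L -> (forall p, p \in L -> uniq (F p)) ->
  (forall p q z, p \in L -> q \in L -> z \in F p -> z \in F q -> p = q) ->
  uniq (flatten (map F L)).
Proof.
elim: L => [|p L IH] //= /andP[pL uL] UF D.
rewrite cat_uniq UF ?mem_head // IH //; last 2 first.
- by move=> q qL; apply: UF; rewrite in_cons qL orbT.
- by move=> q q' z qL q'L; apply: D; rewrite in_cons ?qL ?q'L orbT.
rewrite andbT; apply/hasPn=> z /flattenP[s /mapP[q qL ->] zq]; apply/negP=> zp.
have epq : p = q by apply: (D p q z) => //; rewrite in_cons ?eqxx ?qL ?orbT.
by move: pL; rewrite epq qL.
Qed.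

Lemma size_flatten_const (T U : eqType) (F : T -> seq U) (L : seq T) k :
  (forall p, p \in L -> size (F p) = k) -> size (flatten (map F L)) = size L * k.
Proof.
elim: L => [|p L IH] //= H; rewrite size_cat H ?mem_head // IH ?mulSn //.
by move=> q qL; apply: H; rewrite in_cons qL orbT.
Qed.

Lemma splits_facts S a p : uniq S -> size S = (size (ranks a)).+1 + 0 ->
  p \in splits (size (ranks a)) (rem (mx S) S) -> True.
Proof. by []. Qed.

Lemma gen_uniq t S : uniq S -> size S = size (ranks t) -> uniq (gen t S).
Proof.
elim: t S => [l|r a IHa b IHb] S US SS //=.
have Sn : S != [::] by case: S SS {US}.
have mS := mx_mem Sn.
have US' : uniq (rem (mx S) S) by rewrite rem_uniq.
have pfacts p : p \in splits (size (ranks a)) (rem (mx S) S) ->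
    [/\ uniq p.1, uniq p.2, size p.1 = size (ranks a) & size p.2 = size (ranks b)].
  move=> pin; have [P1 s1] := splits_mem pin.
  have U12 : uniq (p.1 ++ p.2) by rewrite (perm_uniq P1).
  move: (U12); rewrite cat_uniq => /and3P[u1 _ u2]; split=> //.
  move: (perm_size P1); rewrite size_cat size_rem // s1 SS /= size_cat.
  by move/eqP; rewrite eqn_add2l => /eqP.
apply: uniq_flatten_map; first exact: splits_uniq.
  move=> p /pfacts[u1 u2 s1 s2]; apply: allpairs_uniq; rewrite ?IHa ?IHb //.
  by move=> [x1 y1] [x2 y2] _ _ /= [-> ->].
move=> p q z pin qin /allpairsP[[x y] [/= xin yin ->]] /allpairsP[[x' y'] [/= xin' yin' [ex ey]]].
apply: (splits_inj US' pin qin).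
have [u1 _ s1 _] := pfacts _ pin; have [u1' _ s1' _] := pfacts _ qin.
have [Px _ _ _ _] := gen_sound u1 s1 xin.
have [Px' _ _ _ _] := gen_sound u1' s1' xin'.
by rewrite perm_sym in Px; apply: (perm_trans Px); rewrite ex.
Qed.

Fixpoint F (t : rtree) : nat :=
  match t with
  | Leaf _ => 1
  | Node _ a b => 'C(size (ranks a) + size (ranks b), size (ranks a)) * F a * F b
  end.

Lemma gen_size t S : size S = size (ranks t) -> size (gen t S) = F t.
Proof.
elim: t S => [l|r a IHa b IHb] S SS //=.
have Sn : S != [::] by case: S SS.
have mS := mx_mem Sn.
rewrite (@size_flatten_const _ _ _ _ (F a * F b)); last first.
  move=> p pin; have [P1 s1] := splits_mem pin.
  have s2 : size p.2 = size (ranks b).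
    move: (perm_size P1); rewrite size_cat size_rem // s1 SS /= size_cat.
    by move/eqP; rewrite eqn_add2l => /eqP.
  by rewrite size_allpairs IHa // IHb.
by rewrite size_splits size_rem // SS /= size_cat mulnA.
Qed.

Lemma cs_none i t : i \notin ranks t -> child_sizes i t = None.
Proof.
elim: t => [l|r a IHa b IHb] //=; rewrite in_cons mem_cat negb_or => /andP[ne /norP[na nb]].
by rewrite eq_sym (negbTE ne) IHa // IHb.
Qed.

Lemma cs_in i t : i \in ranks t -> exists p, child_sizes i t = Some p.
Proof.
elim: t => [l|r a IHa b IHb] //=; rewrite in_cons mem_cat.
case: (i =P r) => [->|ne] /=; first by rewrite eqxx; eauto.
have -> : (r == i) = false by apply/eqP => e; apply: ne.
case/orP=> [ia|ib]; first by have [p ->] := IHa ia; eauto.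
have [p ->] := IHb ib.
by case: (child_sizes i a); eauto.
Qed.

Local Open Scope ring_scope.

Definition fe (p : nat * nat) : rat :=
  ((p.1 + p.2 - 2)`!)%:R / (((p.1 - 1)`!)%:R * ((p.2 - 1)`!)%:R).

Lemma fe_bin ka kb : fe (ka.+1, kb.+1) = ('C(ka + kb, ka))%:R.
Proof.
rewrite /fe /= subn1 /= addSn addnS /= subn2 /=.
have := bin_fact (leq_addr kb ka); rewrite addKn => <-.
rewrite subn1 /= [X in X / _]natrM -[X in _ / X]natrM mulfK //.
by rewrite pnatr_eq0 -lt0n muln_gt0 !fact_gt0.
Qed.

Lemma prod_F t : uniq (ranks t) ->
  \prod_(i <- ranks t) fe (odflt (1%N, 1%N) (child_sizes i t)) = (F t)%:R.
Proof.
elim: t => [l|r a IHa b IHb] /=; first by rewrite big_nil.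
rewrite cat_uniq mem_cat negb_or => /andP[/andP[ra rb] /and3P[ua D ub]].
rewrite big_cons eqxx /= big_cat /=.
rewrite (@eq_big_seq _ _ _ _ _ _ (fun i => fe (odflt (1%N, 1%N) (child_sizes i a)))); last first.
  move=> i ia /=; have [p ->] := cs_in ia.
  by have -> : (r == i) = false by apply/eqP=> ri; move: ra; rewrite ri ia.
rewrite [X in _ * (_ * X)](@eq_big_seq _ _ _ _ _ _ (fun i => fe (odflt (1%N, 1%N) (child_sizes i b)))); last first.
  move=> i ib /=.
  have -> : (r == i) = false by apply/eqP=> ri; move: rb; rewrite ri ib.
  rewrite cs_none //; apply/negP=> ia; move/hasPn: D => /(_ i ib); rewrite ia.
  by [].
rewrite IHa // IHb // !size_leaves fe_bin !natrM mulrA.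
by [].
Qed.

Local Open Scope nat_scope.

Lemma le_count (A B : seq rtree) :
  uniq A -> (forall t, t \in A -> has (riso t) B) ->
  {in A &, forall t u, riso t u -> t = u} -> size A <= size B.
Proof.
move=> UA cov inj.
pose idx t := find (riso t) B.
have : uniq (map idx A).
  rewrite map_inj_in_uniq // => t u tA uA e.
  apply: inj => //.
  have ht := nth_find t (cov t tA); have hu := nth_find t (cov u uA).
  rewrite -/(idx t) e in ht.
  exact: riso_trans ht (riso_sym hu).
move/uniq_leq_size => /(_ (iota 0 (size B))); rewrite size_map size_iota; apply.
move=> i /mapP[t tA ->]; rewrite mem_iota add0n /=.
by rewrite -has_find cov.
Qed.

Lemma pairwise_riso (L : seq rtree) : pairwise (fun a b => ~~ riso a b) L ->
  uniq L /\ {in L &, forall t u, riso t u -> t = u}.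
Proof.
elim: L => [|x L IH] //= /andP[/allP H /IH[UL inj]]; split.
  by rewrite UL andbT; apply/negP=> /H; rewrite riso_refl.
move=> t u; rewrite !in_cons => /orP[/eqP->|tL] /orP[/eqP->|uL] r //.
- by move: (H _ uL); rewrite r.
- by move: (H _ tL); rewrite (riso_sym r).
- exact: inj.
Qed.

Lemma count_eq (L1 L2 : seq rtree) :
  pairwise (fun a b => ~~ riso a b) L1 ->
  uniq L2 -> {in L2 &, forall u v, riso u v -> u = v} ->
  (forall t, t \in L1 -> exists2 v, v \in L2 & riso t v) ->
  (forall v, v \in L2 -> exists2 t, t \in L1 & riso v t) ->
  size L1 = size L2.
Proof.
move=> /pairwise_riso[U1 I1] U2 I2 C1 C2; apply/eqP; rewrite eqn_leq.
rewrite le_count //=; first rewrite le_count //.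
  by move=> v /C2[t tin r]; apply/hasP; exists t.
by move=> t /C1[v vin r]; apply/hasP; exists v.
Qed.

Local Open Scope ring_scope.

Theorem proposition1 (n : nat) (T : ptree) (g : rtree) (c : nat) :
  (2 <= n)%N -> kingman_pp n T -> GKnC n T g ->
  num_trees (fun g' => GKnC n T g' /\ ltiso g' g) c ->
  (c%:R : rat) =
  \prod_(1 <= i < n)
     (let p := odflt (1%N, 1%N) (child_sizes i g) in
      ((p.1 + p.2 - 2)`!)%:R / (((p.1 - 1)`!)%:R * ((p.2 - 1)`!)%:R)).
Proof.
move=> _ _ [[Lg [Rg Og]] Cg] [l [sl Pl pw cov]].
set S0 := iota 1 n.-1.
have US0 : uniq S0 by apply: iota_uniq.
have sS0 : size S0 = size (ranks g) by rewrite (perm_size Rg).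
have ULg : uniq (leaves g) by rewrite (perm_uniq Lg) iota_uniq.
have URg : uniq (ranks g) by rewrite (perm_uniq Rg).
have -> : c = size (gen g S0).
  rewrite -sl; apply: count_eq => //.
  - exact: gen_uniq.
  - move=> u v uin vin; apply: riso_eq.
      by have [_ _ -> _ _] := gen_sound US0 sS0 uin.
    have [_ _ -> _ _] := gen_sound US0 sS0 uin.
    by have [_ _ -> _ _] := gen_sound US0 sS0 vin.
  - move=> t /tree_inP /Pl [[[_ [Rt Ot]] _] It].
    apply: gen_complete => //; exact: (perm_trans Rt).
  - move=> v vin; have [Rv Ov Lv Cv Iv] := gen_sound US0 sS0 vin.
    have H : GKnC n T v /\ ltiso v g.
      split=> //; split; first by split; rewrite ?Lv.
      by move=> D DT Dn; rewrite Cv; apply: Cg.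
    by have [u /tree_inP uin r] := cov v H; exists u.
rewrite gen_size // (perm_big (ranks g)); last by rewrite /index_iota subn1 perm_sym.
by rewrite -prod_F.
Qed.
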